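(* There is an absolute constant $\alpha>0$ (independent of $n,c,\Delta,V$) such that the following holds. Let $c>4$, $\Delta>0$, $n\ge 2$, and let $V$ be a real $d\times n$ matrix with columns $\vec v_1,\dots,\vec v_n\in\mathbb{R}^d$. Let $S=\{i\in[n]: \mathbf{E}[D_i]\le c\}$ be the set of vertices of expected degree at most $c$ in $G\sim\mathcal{G}_V$. Suppose the expected number of triangles of $G\sim\mathcal{G}_V$ all three of whose vertices lie in $S$ is at least $\Delta n$. Then $$\mathrm{rank}(V)\ \ge\ \alpha\,\frac{\Delta^4}{c^9}\cdot\frac{n}{\lg^2 n}.$$ (The paper phrases this as $\mathrm{rank}(V)\ge \min(1,\mathrm{poly}(\Delta/c))\, n/\lg^2 n$.)
   Context: For vectors $\vec v_1,\dots,\vec v_n\in\mathbb{R}^d$ (columns of a matrix $V$), $\mathcal{G}_V$ is the distribution on simple undirected graphs with vertex set $[n]$ in which, independently for each unordered pair $\{i,j\}$ with $i\neq j$, the edge $(i,j)$ is present with probability $p_{ij}=\max(0,\min(\vec v_i\cdot\vec v_j,1))$. $D_i$ denotes the (random) degree of vertex $i$, so $\mathbf{E}[D_i]=\sum_{j\ne i}p_{ij}$. A triangle is a set of three distinct vertices that are pairwise adjacent. $\lg$ denotes the base-2 logarithm. *)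

(* Defs.v *)
From Stdlib Require Import Reals List Arith Bool.
Import ListNotations.
Open Scope bool_scope.
Open Scope R_scope.

Definition rsum (m : nat) (f : nat -> R) : R :=
  fold_right Rplus 0 (map f (seq 0 m)).

(* A real d x n matrix is V : nat -> nat -> R, entry (row i, column j) = V i j,
   only entries with i < d, j < n matter. Column j is the vector v_j (0-based). *)
Definition dotc (d : nat) (V : nat -> nat -> R) (j k : nat) : R :=
  rsum d (fun i => V i j * V i k).

Definition pedge (d : nat) (V : nat -> nat -> R) (j k : nat) : R :=
  Rmax 0 (Rmin (dotc d V j k) 1).

Definition exp_deg (d n : nat) (V : nat -> nat -> R) (j : nat) : R :=
  rsum n (fun k => if Nat.eqb k j then 0 else pedge d V j k).

Definition inS (d n : nat) (V : nat -> nat -> R) (c : R) (j : nat) : bool :=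
  if Rle_dec (exp_deg d n V j) c then true else false.

(* Expected number of triangles with all three vertices in S: by linearity of
   expectation and independence of the edges, the sum over i<j<k of
   p_ij p_jk p_ik restricted to triples inside S. *)
Definition exp_tri_S (d n : nat) (V : nat -> nat -> R) (c : R) : R :=
  rsum n (fun i => rsum n (fun j => rsum n (fun k =>
    if Nat.ltb i j && Nat.ltb j k && inS d n V c i && inS d n V c j && inS d n V c k
    then pedge d V i j * pedge d V j k * pedge d V i k
    else 0))).

Definition cols_indep (d n : nat) (V : nat -> nat -> R) (cols : list nat) : Prop :=
  NoDup cols /\ (forall j, In j cols -> (j < n)%nat) /\
  forall a : nat -> R,
    (forall i, (i < d)%nat ->
       rsum (length cols) (fun t => a t * V i (nth t cols 0%nat)) = 0) ->
    forall t, (t < length cols)%nat -> a t = 0.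

Definition is_rank (d n : nat) (V : nat -> nat -> R) (r : nat) : Prop :=
  (exists cols, cols_indep d n V cols /\ length cols = r) /\
  (forall cols, cols_indep d n V cols -> (length cols <= r)%nat).

Definition lg (x : R) : R := ln x / ln 2.

(* Main.v *)
Require Import Defs.
From Stdlib Require Import Reals List Arith.
From Stdlib Require Import Lra Lia Psatz Classical Bool.
Import ListNotations.
Open Scope R_scope.


Lemma rsum_0 f : rsum 0 f = 0.
Proof. reflexivity. Qed.

Lemma rsum_S m f : rsum (S m) f = rsum m f + f m.
Proof.
  unfold rsum. rewrite seq_S, map_app, fold_right_app. simpl.
  generalize (f m). induction (map f (seq 0 m)); simpl; intros; [lra|].
  rewrite IHl. lra.
Qed.

Lemma rsum_Sl m f : rsum (S m) f = f 0%nat + rsum m (fun k => f (S k)).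
Proof.
  induction m. rewrite rsum_S, !rsum_0. lra.
  rewrite rsum_S, IHm, rsum_S. lra.
Qed.

Lemma rsum_ext m f g : (forall k, (k < m)%nat -> f k = g k) -> rsum m f = rsum m g.
Proof.
  induction m; intros H. reflexivity.
  rewrite !rsum_S, IHm by (intros; apply H; lia). rewrite H by lia. reflexivity.
Qed.

Lemma rsum_le m f g : (forall k, (k < m)%nat -> f k <= g k) -> rsum m f <= rsum m g.
Proof.
  induction m; intros H. rewrite !rsum_0; lra.
  rewrite !rsum_S. specialize (H m ltac:(lia)) as H1. assert (rsum m f <= rsum m g) by (apply IHm; intros; apply H; lia). lra.
Qed.

Lemma rsum_plus m f g : rsum m (fun k => f k + g k) = rsum m f + rsum m g.
Proof. induction m. rewrite !rsum_0; lra. rewrite !rsum_S, IHm. lra. Qed.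

Lemma rsum_scal m a f : rsum m (fun k => a * f k) = a * rsum m f.
Proof. induction m. rewrite !rsum_0; lra. rewrite !rsum_S, IHm. lra. Qed.

Lemma rsum_scalr m a f : rsum m (fun k => f k * a) = rsum m f * a.
Proof. induction m. rewrite !rsum_0; lra. rewrite !rsum_S, IHm. lra. Qed.

Lemma rsum_opp m f : rsum m (fun k => - f k) = - rsum m f.
Proof. induction m. rewrite !rsum_0; lra. rewrite !rsum_S, IHm. lra. Qed.

Lemma rsum_const m a : rsum m (fun _ => a) = INR m * a.
Proof. induction m. rewrite !rsum_0; simpl; lra. rewrite !rsum_S, IHm, S_INR. lra. Qed.

Lemma rsum_nonneg m f : (forall k, (k < m)%nat -> 0 <= f k) -> 0 <= rsum m f.
Proof. intros H. rewrite <- (Rmult_0_l (INR m)), Rmult_comm, <- rsum_const. apply rsum_le; auto. Qed.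

Lemma rsum_swap m n f :
  rsum m (fun i => rsum n (fun j => f i j)) = rsum n (fun j => rsum m (fun i => f i j)).
Proof.
  induction m. rewrite rsum_0. rewrite (rsum_ext n _ (fun _ => 0)) by (intros; apply rsum_0).
  rewrite rsum_const; lra.
  rewrite rsum_S, IHm. rewrite <- rsum_plus. apply rsum_ext. intros. rewrite rsum_S. reflexivity.
Qed.

Lemma rsum_term_le m f k : (forall k, (k < m)%nat -> 0 <= f k) -> (k < m)%nat -> f k <= rsum m f.
Proof.
  induction m; intros H Hk. lia. rewrite rsum_S.
  destruct (Nat.eq_dec k m). subst. assert (0 <= rsum m f) by (apply rsum_nonneg; intros; apply H; lia). lra.
  assert (f k <= rsum m f) by (apply IHm; [intros; apply H; lia | lia]). specialize (H m ltac:(lia)). lra.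
Qed.

Lemma rsum_ind m t a : (t < m)%nat -> rsum m (fun k => if Nat.eqb k t then a else 0) = a.
Proof.
  induction m; intros H. lia. rewrite rsum_S.
  destruct (Nat.eq_dec t m). subst. rewrite Nat.eqb_refl.
  rewrite (rsum_ext m _ (fun _ => 0)). rewrite rsum_const; lra.
  intros. destruct (Nat.eqb_spec k m); [lia|auto].
  rewrite IHm by lia. destruct (Nat.eqb_spec m t); [lia|lra].
Qed.

Lemma rsum_prod m n f g :
  rsum m (fun i => rsum n (fun j => f i * g j)) = rsum m f * rsum n g.
Proof.
  rewrite <- rsum_scalr. apply rsum_ext. intros. rewrite rsum_scal. reflexivity.
Qed.

Definition dot (d : nat) (u w : nat -> R) : R := rsum d (fun x => u x * w x).

Lemma dot_sym d u w : dot d u w = dot d w u.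
Proof. unfold dot. apply rsum_ext. intros; ring. Qed.

Lemma dot_ext d u u' w w' : (forall x, (x < d)%nat -> u x = u' x) -> (forall x, (x < d)%nat -> w x = w' x) ->
  dot d u w = dot d u' w'.
Proof. intros H1 H2. unfold dot. apply rsum_ext. intros. rewrite H1, H2 by auto. reflexivity. Qed.

Lemma dot_lin d u a w z : dot d (fun x => u x + a * w x) z = dot d u z + a * dot d w z.
Proof. unfold dot. rewrite <- rsum_scal, <- rsum_plus. apply rsum_ext; intros; ring. Qed.

Lemma dot_scal2 d a u b w : dot d (fun x => a * u x) (fun x => b * w x) = a * b * dot d u w.
Proof. unfold dot. rewrite <- rsum_scal. apply rsum_ext; intros; ring. Qed.

Lemma dot_zero_l d w : dot d (fun _ => 0) w = 0.
Proof. unfold dot. rewrite (rsum_ext d _ (fun _ => 0)) by (intros; ring). rewrite rsum_const; ring. Qed.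

Lemma dot_self_nonneg d u : 0 <= dot d u u.
Proof. unfold dot. apply rsum_nonneg. intros. nra. Qed.

Lemma dot_half d u w : 2 * dot d u w <= dot d u u + dot d w w /\ - (2 * dot d u w) <= dot d u u + dot d w w.
Proof.
  unfold dot.
  assert (E1 : rsum d (fun x => (u x - w x) * (u x - w x)) = rsum d (fun x => u x*u x) + rsum d (fun x => w x * w x) + - (2 * rsum d (fun x => u x * w x))).
  { rewrite <- rsum_scal, <- rsum_opp, <- !rsum_plus. apply rsum_ext; intros; ring. }
  assert (E2 : rsum d (fun x => (u x + w x) * (u x + w x)) = rsum d (fun x => u x*u x) + rsum d (fun x => w x * w x) + (2 * rsum d (fun x => u x * w x))).
  { rewrite <- rsum_scal, <- !rsum_plus. apply rsum_ext; intros; ring. }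
  assert (0 <= rsum d (fun x => (u x - w x) * (u x - w x))) by (apply rsum_nonneg; intros; apply Rle_0_sqr).
  assert (0 <= rsum d (fun x => (u x + w x) * (u x + w x))) by (apply rsum_nonneg; intros; apply Rle_0_sqr).
  lra.
Qed.

Lemma dot_zero_self d u : dot d u u = 0 -> forall x, (x < d)%nat -> u x = 0.
Proof.
  intros H x Hx. assert (u x * u x <= dot d u u).
  { unfold dot. apply (rsum_term_le d (fun x => u x * u x)); auto. intros; nra. }
  nra.
Qed.

Lemma gram_psd d m (c : nat -> R) (z : nat -> nat -> R) :
  0 <= rsum m (fun i => rsum m (fun j => c i * c j * dot d (z i) (z j))).
Proof.
  set (w := fun x => rsum m (fun i => c i * z i x)).
  assert (E : rsum m (fun i => rsum m (fun j => c i * c j * dot d (z i) (z j))) = dot d w w).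
  { unfold dot, w.
    transitivity (rsum m (fun i => rsum d (fun x => rsum m (fun j => c i * z i x * (c j * z j x))))).
    { apply rsum_ext; intros i _. rewrite rsum_swap. apply rsum_ext; intros j _.
      rewrite <- rsum_scal. apply rsum_ext; intros; ring. }
    rewrite rsum_swap. apply rsum_ext; intros x _.
    rewrite <- rsum_scalr. apply rsum_ext; intros i _. rewrite rsum_scal. reflexivity. }
  rewrite E. apply dot_self_nonneg.
Qed.

Lemma final_ineq (r A F B G : R) : 0 <= r -> A * A <= r * F -> 0 <= F -> 0 <= G -> 0 <= A ->
  (A + B) ^ 2 <= (r + 1) * (F + G + B * B).
Proof.
  intros Hr HA HF HG HA0.
  destruct (Req_dec r 0).
  - subst. assert (A = 0) by nra. subst. nra.
  - assert (0 < r) by lra.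
    apply (Rmult_le_reg_l r); auto.
    assert (r * (A+B)^2 <= (r+1) * (A*A + r * (B*B))).
    { pose proof (Rle_0_sqr (A - r * B)). unfold Rsqr in *. nra. }
    assert ((r+1) * (A*A) <= (r+1) * (r * F)) by (apply Rmult_le_compat_l; lra).
    assert (0 <= (r+1) * (r * G)) by (apply Rmult_le_pos; [lra| apply Rmult_le_pos; lra]).
    nra.
Qed.

Lemma rank_ineq d (r : nat) : forall (b : nat -> nat -> R) (m : nat) (y : nat -> nat -> R),
  (forall i, (i < m)%nat -> exists a : nat -> R, forall x, (x < d)%nat ->
      y i x = rsum r (fun k => a k * b k x)) ->
  (rsum m (fun i => dot d (y i) (y i))) ^ 2 <=
    INR r * rsum m (fun i => rsum m (fun j => (dot d (y i) (y j)) ^ 2)).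
Proof.
  induction r; intros b m y Hs.
  - rewrite (rsum_ext m _ (fun _ => 0)). rewrite rsum_const. simpl. lra.
    intros i Hi. destruct (Hs i Hi) as [a Ha].
    rewrite (dot_ext d (y i) (fun _ => 0) (y i) (y i)) by (auto; intros; rewrite Ha by auto; apply rsum_0).
    apply dot_zero_l.
  - set (e := b 0%nat). set (beta := dot d e e).
    assert (HF : 0 <= rsum m (fun i => rsum m (fun j => (dot d (y i) (y j)) ^ 2))).
    { apply rsum_nonneg; intros; apply rsum_nonneg; intros; nra. }
    destruct (Req_dec beta 0) as [Hb|Hb].
    + assert (He : forall x, (x < d)%nat -> e x = 0) by (apply dot_zero_self; auto).
      apply Rle_trans with (INR r * rsum m (fun i => rsum m (fun j => (dot d (y i) (y j)) ^ 2))).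
      2: { rewrite S_INR. nra. }
      apply (IHr (fun k => b (S k))). intros i Hi. destruct (Hs i Hi) as [a Ha].
      exists (fun k => a (S k)). intros x Hx. rewrite Ha, rsum_Sl by auto. fold e. rewrite He by auto. ring.
    + assert (Hbp : 0 < beta) by (pose proof (dot_self_nonneg d e); fold beta in H; lra).
      set (s := fun i => dot d (y i) e / beta).
      set (p := fun i x => y i x + (- s i) * e x).
      set (b' := fun k x => b (S k) x + (- (dot d (b (S k)) e / beta)) * e x).
      assert (Hpe : forall i, dot d (p i) e = 0).
      { intros i. unfold p. cbv beta. rewrite dot_lin. fold beta. unfold s. field. lra. }
      assert (Hyy : forall i j, dot d (y i) (y j) = dot d (p i) (p j) + beta * (s i * s j)).
      { intros i j.
        rewrite (dot_ext d (y i) (fun x => p i x + s i * e x) (y j) (fun x => p j x + s j * e x))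
          by (intros; unfold p; ring).
        rewrite dot_lin, (dot_sym d (p i)), dot_lin, (dot_sym d e (fun x => p j x + s j * e x)), dot_lin, (dot_sym d e (p i)), !Hpe, (dot_sym d (p j)).
        fold beta. ring. }
      assert (IH : (rsum m (fun i => dot d (p i) (p i))) ^ 2 <=
                   INR r * rsum m (fun i => rsum m (fun j => (dot d (p i) (p j)) ^ 2))).
      { apply (IHr b'). intros i Hi. destruct (Hs i Hi) as [a Ha].
        exists (fun k => a (S k)).
        assert (Hdy : dot d (y i) e = a 0%nat * beta + rsum r (fun k => a (S k) * dot d (b (S k)) e)).
        { rewrite (dot_ext d (y i) (fun x => rsum (S r) (fun k => a k * b k x)) e e) by auto.
          unfold dot.
          rewrite (rsum_ext d _ (fun x => rsum (S r) (fun k => a k * b k x * e x)))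
            by (intros; rewrite rsum_scalr; reflexivity).
          rewrite rsum_swap, rsum_Sl. f_equal.
          { unfold beta, dot. rewrite <- rsum_scal. apply rsum_ext; intros. unfold e. ring. }
          apply rsum_ext. intros. rewrite <- rsum_scal. apply rsum_ext; intros; ring. }
        intros x Hx. unfold p, b'. rewrite Ha, rsum_Sl by auto.
        transitivity (rsum r (fun k => a (S k) * b (S k) x) +
                      (- (rsum r (fun k => a (S k) * dot d (b (S k)) e) / beta)) * e x).
        { unfold s. rewrite Hdy. fold e. field. lra. }
        unfold Rdiv. rewrite <- rsum_scalr, <- rsum_opp, Rmult_comm, <- rsum_scal, <- rsum_plus.
        apply rsum_ext; intros; ring. }
      assert (E1 : rsum m (fun i => dot d (y i) (y i)) = rsum m (fun i => dot d (p i) (p i)) + beta * rsum m (fun i => s i * s i)).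
      { rewrite <- rsum_scal, <- rsum_plus. apply rsum_ext; intros; apply Hyy. }
      assert (E2 : rsum m (fun i => rsum m (fun j => (dot d (y i) (y j)) ^ 2)) =
         rsum m (fun i => rsum m (fun j => (dot d (p i) (p j)) ^ 2)) +
         2 * beta * rsum m (fun i => rsum m (fun j => s i * s j * dot d (p i) (p j))) +
         (beta * rsum m (fun i => s i * s i)) * (beta * rsum m (fun i => s i * s i))).
      { rewrite <- (rsum_scal m beta (fun i => s i * s i)). rewrite <- (rsum_prod m m (fun i => beta * (s i * s i)) (fun i => beta * (s i * s i))).
        rewrite <- (rsum_scal m (2 * beta)), <- !rsum_plus. apply rsum_ext; intros i _.
        rewrite <- !rsum_scal, <- !rsum_plus. apply rsum_ext; intros j _. rewrite Hyy. ring. }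
      rewrite E1, E2, S_INR.
      apply final_ineq.
      * apply pos_INR.
      * rewrite <- Rsqr_pow2 in IH. exact IH.
      * apply rsum_nonneg; intros; apply rsum_nonneg; intros; nra.
      * pose proof (gram_psd d m s p). nra.
      * apply rsum_nonneg; intros; apply dot_self_nonneg.
Qed.

Definition in_span (d : nat) (V : nat -> nat -> R) (cols : list nat) (j : nat) : Prop :=
  exists a : nat -> R, forall x, (x < d)%nat ->
    V x j = rsum (length cols) (fun k => a k * V x (nth k cols 0%nat)).

Lemma indep_extend d n V cols j : cols_indep d n V cols -> (j < n)%nat -> ~ in_span d V cols j ->
  cols_indep d n V (j :: cols).
Proof.
  intros [Hnd [Hlt Hind]] Hj Hns. split; [|split].
  - constructor; auto. intros Hin. apply Hns.
    destruct (In_nth cols j 0%nat Hin) as [t [Ht Hnt]].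
    exists (fun k => if Nat.eqb k t then 1 else 0). intros x Hx.
    rewrite (rsum_ext _ _ (fun k => if Nat.eqb k t then V x j else 0)).
    rewrite rsum_ind; auto.
    intros k Hk. destruct (Nat.eqb_spec k t) as [e|e]. rewrite e, Hnt. ring. ring.
  - intros k [<-|Hk]; auto.
  - intros a Ha. simpl length in Ha.
    assert (Ha' : forall i, (i < d)%nat -> a 0%nat * V i j + rsum (length cols) (fun t => a (S t) * V i (nth t cols 0%nat)) = 0).
    { intros i Hi. rewrite <- (Ha i Hi), rsum_Sl. reflexivity. }
    assert (H0 : a 0%nat = 0).
    { destruct (Req_dec (a 0%nat) 0); auto. exfalso. apply Hns.
      exists (fun t => - a (S t) / a 0%nat). intros x Hx.
      unfold Rdiv. rewrite (rsum_ext _ _ (fun t => (- / a 0%nat) * (a (S t) * V x (nth t cols 0%nat)))) by (intros; ring).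
      rewrite rsum_scal. specialize (Ha' x Hx). field_simplify; auto.
      apply (Rmult_eq_reg_l (a 0%nat)); auto. field_simplify; auto. lra. }
    assert (HS : forall t, (t < length cols)%nat -> a (S t) = 0).
    { apply (Hind (fun t => a (S t))). intros i Hi. specialize (Ha' i Hi). rewrite H0 in Ha'. lra. }
    intros t Ht. destruct t; auto. apply HS. simpl in Ht. lia.
Qed.

Lemma span_all d n V r : is_rank d n V r ->
  exists cols, length cols = r /\ forall j, (j < n)%nat -> in_span d V cols j.
Proof.
  intros [[cols [Hc Hl]] Hmax]. exists cols. split; auto.
  intros j Hj. destruct (classic (in_span d V cols j)) as [H|H]; auto.
  exfalso. pose proof (Hmax _ (indep_extend d n V cols j Hc Hj H)). simpl in H0. lia.
Qed.

Definition Q d (V : nat -> nat -> R) j k := if Nat.eqb k j then 0 else pedge d V j k.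
Definition indb (b : bool) : R := if b then 1 else 0.
Definition nn d (V : nat -> nat -> R) i := dotc d V i i.
Definition inH d n V c tau i := inS d n V c i && (if Rle_dec tau (nn d V i) then true else false).

Lemma indb_nonneg b : 0 <= indb b.
Proof. destruct b; simpl; lra. Qed.

Lemma dotc_sym d V j k : dotc d V j k = dotc d V k j.
Proof. unfold dotc. apply rsum_ext; intros; ring. Qed.

Lemma pedge_sym d V j k : pedge d V j k = pedge d V k j.
Proof. unfold pedge. rewrite dotc_sym. reflexivity. Qed.

Lemma pedge_bounds d V j k : 0 <= pedge d V j k <= 1.
Proof. unfold pedge, Rmax, Rmin. repeat destruct Rle_dec; lra. Qed.

Lemma Q_bounds d V j k : 0 <= Q d V j k <= 1.
Proof. unfold Q. destruct Nat.eqb. lra. apply pedge_bounds. Qed.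

Lemma Q_sym d V j k : Q d V j k = Q d V k j.
Proof. unfold Q. rewrite Nat.eqb_sym, pedge_sym. reflexivity. Qed.

Lemma Q_neq d V j k : j <> k -> Q d V j k = pedge d V j k.
Proof. intros. unfold Q. destruct (Nat.eqb_spec k j); [lia|auto]. Qed.

Lemma deg_eq d n V j : exp_deg d n V j = rsum n (Q d V j).
Proof. reflexivity. Qed.

Lemma deg_nonneg d n V j : 0 <= exp_deg d n V j.
Proof. rewrite deg_eq. apply rsum_nonneg. intros; apply Q_bounds. Qed.

Lemma inS_deg d n V c j : inS d n V c j = true -> exp_deg d n V j <= c.
Proof. unfold inS. destruct Rle_dec; auto; discriminate. Qed.

Lemma inH_S d n V c tau j : inH d n V c tau j = true -> inS d n V c j = true.
Proof. unfold inH. intros H. apply andb_true_iff in H. tauto. Qed.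

Lemma inH_nn d n V c tau j : inH d n V c tau j = true -> tau <= nn d V j.
Proof. unfold inH. intros H. apply andb_true_iff in H. destruct H as [_ H]. destruct Rle_dec; auto; discriminate. Qed.

Lemma notH_nn d n V c tau j : inS d n V c j = true -> inH d n V c tau j = false -> nn d V j < tau.
Proof. unfold inH. intros H1 H2. rewrite H1 in H2. simpl in H2. destruct Rle_dec; [discriminate|lra]. Qed.

Lemma dotc_half d V i j : 2 * dotc d V i j <= nn d V i + nn d V j.
Proof. apply (dot_half d (fun x => V x i) (fun x => V x j)). Qed.

Lemma pedge_small d V i j tau : 0 < tau -> dotc d V i j < tau -> pedge d V i j < tau.
Proof. intros. unfold pedge, Rmax, Rmin. repeat destruct Rle_dec; lra. Qed.

Lemma tri_point d n V c tau i j k : 0 < tau ->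
  (if Nat.ltb i j && Nat.ltb j k && inS d n V c i && inS d n V c j && inS d n V c k
   then pedge d V i j * pedge d V j k * pedge d V i k else 0)
  <= indb (inS d n V c i) * indb (inS d n V c k) * (tau * (Q d V i k * Q d V k j))
   + indb (inH d n V c tau i) * (Q d V i j * Q d V i k)
   + indb (inH d n V c tau j) * (Q d V j i * Q d V j k)
   + indb (inH d n V c tau k) * (Q d V k i * Q d V k j).
Proof.
  intros Ht.
  pose proof (Q_bounds d V i k). pose proof (Q_bounds d V k j). pose proof (Q_bounds d V i j).
  pose proof (Q_bounds d V j i). pose proof (Q_bounds d V j k). pose proof (Q_bounds d V k i).
  assert (P : forall a b, 0 <= indb a * indb b) by (intros; apply Rmult_le_pos; apply indb_nonneg).
  assert (Z : 0 <= indb (inS d n V c i) * indb (inS d n V c k) * (tau * (Q d V i k * Q d V k j))).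
  { apply Rmult_le_pos; auto. apply Rmult_le_pos; [lra|]. apply Rmult_le_pos; lra. }
  assert (Z1 : forall b x y, 0 <= x -> 0 <= y -> 0 <= indb b * (x * y)).
  { intros. apply Rmult_le_pos. apply indb_nonneg. apply Rmult_le_pos; auto. }
  pose proof (Z1 (inH d n V c tau i) _ _ (proj1 H1) (proj1 H)).
  pose proof (Z1 (inH d n V c tau j) _ _ (proj1 H2) (proj1 H3)).
  pose proof (Z1 (inH d n V c tau k) _ _ (proj1 H4) (proj1 H0)).
  destruct (Nat.ltb i j && Nat.ltb j k && inS d n V c i && inS d n V c j && inS d n V c k) eqn:E.
  2: lra.
  repeat rewrite andb_true_iff in E. destruct E as [[[[E1 E2] Si] Sj] Sk].
  apply Nat.ltb_lt in E1. apply Nat.ltb_lt in E2.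
  rewrite (Q_neq d V i j), (Q_neq d V i k), (Q_neq d V j i), (Q_neq d V j k), (Q_neq d V k i), (Q_neq d V k j) in * by lia.
  rewrite (pedge_sym d V j i), (pedge_sym d V k i), (pedge_sym d V k j) in *.
  set (a := pedge d V i j) in *. set (b := pedge d V j k) in *. set (e := pedge d V i k) in *.
  destruct (inH d n V c tau i) eqn:Hi. { change (indb true) with 1. assert (a*b*e <= a*e) by (assert (0 <= a*e) by (apply Rmult_le_pos; lra); nra). lra. }
  destruct (inH d n V c tau j) eqn:Hj. { change (indb true) with 1. assert (a*b*e <= a*b) by (assert (0 <= a*b) by (apply Rmult_le_pos; lra); nra). lra. }
  destruct (inH d n V c tau k) eqn:Hk. { change (indb true) with 1. assert (a*b*e <= e*b) by (assert (0 <= e*b) by (apply Rmult_le_pos; lra); nra). lra. }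
  pose proof (notH_nn _ _ _ _ _ _ Si Hi). pose proof (notH_nn _ _ _ _ _ _ Sj Hj).
  pose proof (dotc_half d V i j).
  assert (a < tau) by (apply pedge_small; lra).
  rewrite Si, Sk. change (indb true) with 1. change (indb false) with 0.
  assert (a*b*e <= tau*(e*b)) by (assert (0 <= e*b) by (apply Rmult_le_pos; lra); nra). lra.
Qed.

Lemma rsum3_plus n (f g : nat -> nat -> nat -> R) :
  rsum n (fun i => rsum n (fun j => rsum n (fun k => f i j k + g i j k))) =
  rsum n (fun i => rsum n (fun j => rsum n (fun k => f i j k))) +
  rsum n (fun i => rsum n (fun j => rsum n (fun k => g i j k))).
Proof.
  rewrite <- rsum_plus. apply rsum_ext; intros. rewrite <- rsum_plus. apply rsum_ext; intros. apply rsum_plus.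
Qed.

Lemma indS_deg d n V c k : 0 <= c -> indb (inS d n V c k) * exp_deg d n V k <= c * indb (inS d n V c k).
Proof.
  intros Hc. destruct (inS d n V c k) eqn:E; unfold indb.
  - pose proof (inS_deg _ _ _ _ _ E). lra.
  - lra.
Qed.

Lemma boundX d n V c tau : 0 < tau -> 0 <= c ->
  rsum n (fun i => rsum n (fun j => rsum n (fun k =>
     indb (inS d n V c i) * indb (inS d n V c k) * (tau * (Q d V i k * Q d V k j)))))
  <= tau * INR n * (c * c).
Proof.
  intros Ht Hc.
  replace (tau * INR n * (c * c)) with (rsum n (fun _ => tau * (c * c))) by (rewrite rsum_const; ring).
  apply rsum_le. intros i Hi. rewrite rsum_swap.
  rewrite (rsum_ext n _ (fun k => (indb (inS d n V c i) * tau * Q d V i k) * (indb (inS d n V c k) * exp_deg d n V k)))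
    by (intros; rewrite deg_eq, <- rsum_scal, <- rsum_scal; apply rsum_ext; intros; ring).
  apply Rle_trans with (rsum n (fun k => (indb (inS d n V c i) * tau * c) * Q d V i k)).
  { apply rsum_le; intros k Hk. pose proof (indS_deg d n V c k Hc). pose proof (indb_nonneg (inS d n V c i)).
    pose proof (indb_nonneg (inS d n V c k)). pose proof (Q_bounds d V i k).
    assert (indb (inS d n V c k) <= 1) by (unfold indb; destruct inS; lra).
    assert (0 <= indb (inS d n V c i) * tau * Q d V i k) by (apply Rmult_le_pos; [apply Rmult_le_pos|]; lra).
    apply Rle_trans with ((indb (inS d n V c i) * tau * Q d V i k) * c). apply Rmult_le_compat_l; nra.
    lra. }
  rewrite rsum_scal, <- deg_eq.
  pose proof (indS_deg d n V c i Hc). pose proof (deg_nonneg d n V i).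
  assert (indb (inS d n V c i) <= 1) by (unfold indb; destruct inS; lra).
  pose proof (indb_nonneg (inS d n V c i)).
  assert (indb (inS d n V c i) * exp_deg d n V i * (tau * c) <= c * 1 * (tau * c)).
  { apply Rmult_le_compat_r. nra. nra. }
  nra.
Qed.

Lemma boundY d n V c tau : 0 <= c ->
  rsum n (fun i => rsum n (fun j => rsum n (fun k => indb (inH d n V c tau i) * (Q d V i j * Q d V i k))))
  <= (c * c) * rsum n (fun i => indb (inH d n V c tau i)).
Proof.
  intros Hc. rewrite <- rsum_scal. apply rsum_le. intros i Hi.
  rewrite (rsum_ext n _ (fun j => indb (inH d n V c tau i) * (Q d V i j * exp_deg d n V i)))
    by (intros; rewrite deg_eq, <- !rsum_scal; apply rsum_ext; intros; ring).
  rewrite (rsum_ext n _ (fun j => (indb (inH d n V c tau i) * exp_deg d n V i) * Q d V i j)) by (intros; ring).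
  rewrite rsum_scal, <- deg_eq.
  pose proof (deg_nonneg d n V i).
  destruct (inH d n V c tau i) eqn:E; unfold indb.
  - pose proof (inS_deg _ _ _ _ _ (inH_S _ _ _ _ _ _ E)). nra.
  - lra.
Qed.

Lemma triA d n V c tau : 0 < tau -> 0 <= c ->
  exp_tri_S d n V c <= tau * INR n * (c * c) + 3 * (c * c) * rsum n (fun i => indb (inH d n V c tau i)).
Proof.
  intros Ht Hc. unfold exp_tri_S.
  eapply Rle_trans.
  { apply rsum_le; intros i Hi; apply rsum_le; intros j Hj; apply rsum_le; intros k Hk.
    apply (tri_point d n V c tau i j k Ht). }
  rewrite !rsum3_plus.
  pose proof (boundX d n V c tau Ht Hc).
  pose proof (boundY d n V c tau Hc).
  assert (E2 : rsum n (fun i => rsum n (fun j => rsum n (fun k => indb (inH d n V c tau j) * (Q d V j i * Q d V j k))))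
     = rsum n (fun i => rsum n (fun j => rsum n (fun k => indb (inH d n V c tau i) * (Q d V i j * Q d V i k))))).
  { rewrite rsum_swap. reflexivity. }
  assert (E3 : rsum n (fun i => rsum n (fun j => rsum n (fun k => indb (inH d n V c tau k) * (Q d V k i * Q d V k j))))
     = rsum n (fun i => rsum n (fun j => rsum n (fun k => indb (inH d n V c tau i) * (Q d V i j * Q d V i k))))).
  { rewrite (rsum_ext n _ (fun i => rsum n (fun k => rsum n (fun j => indb (inH d n V c tau k) * (Q d V k i * Q d V k j)))))
      by (intros; apply rsum_swap).
    rewrite rsum_swap. reflexivity. }
  rewrite E2, E3. lra.
Qed.

Definition yv d n V c tau i : nat -> R :=
  if inH d n V c tau i then (fun x => / sqrt (nn d V i) * V x i) else (fun _ => 0).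

Definition gg d n V c tau i j := dot d (yv d n V c tau i) (yv d n V c tau j).

Lemma nn_nonneg d V i : 0 <= nn d V i.
Proof. apply (dot_self_nonneg d (fun x => V x i)). Qed.

Lemma gg_HH d n V c tau i j : inH d n V c tau i = true -> inH d n V c tau j = true ->
  gg d n V c tau i j = / sqrt (nn d V i) * / sqrt (nn d V j) * dotc d V i j.
Proof.
  intros Hi Hj. unfold gg, yv. rewrite Hi, Hj. apply dot_scal2.
Qed.

Lemma gg_0l d n V c tau i j : inH d n V c tau i = false -> gg d n V c tau i j = 0.
Proof. intros Hi. unfold gg. unfold yv at 1. rewrite Hi. apply dot_zero_l. Qed.

Lemma gg_0r d n V c tau i j : inH d n V c tau j = false -> gg d n V c tau i j = 0.
Proof. intros Hj. unfold gg. rewrite dot_sym. unfold yv at 1. rewrite Hj. apply dot_zero_l. Qed.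

Lemma gg_diag d n V c tau i : 0 < tau -> gg d n V c tau i i = indb (inH d n V c tau i).
Proof.
  intros Ht. destruct (inH d n V c tau i) eqn:E.
  - rewrite gg_HH by auto. pose proof (inH_nn _ _ _ _ _ _ E).
    pose proof (sqrt_sqrt (nn d V i) (nn_nonneg d V i)).
    pose proof (sqrt_lt_R0 (nn d V i) ltac:(lra)).
    unfold indb. fold (nn d V i). rewrite <- H0 at 3. field. lra.
  - apply gg_0l; auto.
Qed.

Lemma gg_abs d n V c tau i j : 0 < tau -> -1 <= gg d n V c tau i j <= 1.
Proof.
  intros Ht. destruct (dot_half d (yv d n V c tau i) (yv d n V c tau j)).
  fold (gg d n V c tau i j) (gg d n V c tau i i) (gg d n V c tau j j) in *.
  rewrite !gg_diag in * by auto.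
  assert (indb (inH d n V c tau i) <= 1) by (unfold indb; destruct (inH d n V c tau i); lra).
  assert (indb (inH d n V c tau j) <= 1) by (unfold indb; destruct (inH d n V c tau j); lra).
  lra.
Qed.

Lemma gg_pos d n V c tau i j : 0 < tau -> tau <= 1 ->
  Rmax 0 (gg d n V c tau i j) <= indb (inH d n V c tau i) * (indb (Nat.eqb j i) + Q d V i j / tau).
Proof.
  intros Ht Ht1. pose proof (Q_bounds d V i j).
  assert (0 <= Q d V i j / tau) by (unfold Rdiv; apply Rmult_le_pos; [lra | left; apply Rinv_0_lt_compat; lra]).
  destruct (inH d n V c tau i) eqn:Hi.
  2: { rewrite gg_0l by auto. unfold indb. rewrite Rmax_left; lra. }
  unfold indb at 1.
  destruct (Nat.eqb_spec j i).
  { subst. rewrite gg_diag by auto. rewrite Hi. unfold indb. rewrite Rmax_right; lra. }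
  unfold indb.
  destruct (inH d n V c tau j) eqn:Hj.
  2: { rewrite gg_0r by auto. rewrite Rmax_left; lra. }
  pose proof (gg_abs d n V c tau i j Ht) as Gab.
  rewrite gg_HH in * by auto. rewrite Q_neq in * by auto.
  pose proof (inH_nn _ _ _ _ _ _ Hi). pose proof (inH_nn _ _ _ _ _ _ Hj).
  pose proof (sqrt_sqrt (nn d V i) (nn_nonneg d V i)).
  pose proof (sqrt_sqrt (nn d V j) (nn_nonneg d V j)).
  set (si := sqrt (nn d V i)) in *. set (sj := sqrt (nn d V j)) in *.
  assert (0 < si) by (apply sqrt_lt_R0; lra). assert (0 < sj) by (apply sqrt_lt_R0; lra).
  assert (Hss : tau <= si * sj).
  { destruct (Rle_lt_dec tau (si * sj)); auto.
    assert (0 < si * sj) by nra.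
    assert (si * sj * (si * sj) < tau * tau) by nra. nra. }
  assert (0 < si * sj) by nra.
  set (t := dotc d V i j) in *.
  rewrite <- Rinv_mult in *.
  rewrite Rmult_1_l, Rplus_0_l.
  unfold pedge. fold t.
  unfold Rmax at 1. destruct (Rle_dec 0 (/ (si * sj) * t)).
  2: { exact H0. }
  unfold Rmin. destruct (Rle_dec t 1).
  - assert (0 <= t).
    { destruct (Rle_lt_dec 0 t); auto. exfalso. assert (0 < / (si * sj)) by (apply Rinv_0_lt_compat; lra). nra. }
    rewrite Rmax_right by lra.
    assert (/ (si * sj) <= / tau) by (apply Rinv_le_contravar; lra).
    unfold Rdiv. assert (/ (si * sj) * t <= / tau * t) by (apply Rmult_le_compat_r; lra). lra.
  - rewrite Rmax_right by lra.
    assert (1 <= / tau). { rewrite <- Rinv_1. apply Rinv_le_contravar; lra. }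
    unfold Rdiv. lra.
Qed.

Lemma sum_pos d n V c tau : 0 < tau -> tau <= 1 -> 0 <= c ->
  rsum n (fun i => rsum n (fun j => Rmax 0 (gg d n V c tau i j)))
  <= rsum n (fun i => indb (inH d n V c tau i)) * (1 + c / tau).
Proof.
  intros Ht Ht1 Hc. rewrite <- rsum_scalr. apply rsum_le. intros i Hi.
  eapply Rle_trans. { apply rsum_le. intros j Hj. apply (gg_pos d n V c tau i j Ht Ht1). }
  rewrite rsum_scal, rsum_plus.
  unfold indb at 2. rewrite (rsum_ind n i 1 Hi).
  unfold Rdiv. rewrite rsum_scalr, <- deg_eq.
  pose proof (deg_nonneg d n V i).
  assert (0 < / tau) by (apply Rinv_0_lt_compat; lra).
  destruct (inH d n V c tau i) eqn:E; unfold indb.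
  - pose proof (inS_deg _ _ _ _ _ (inH_S _ _ _ _ _ _ E)). nra.
  - lra.
Qed.

Lemma sum_sq d n V c tau : 0 < tau -> tau <= 1 -> 0 <= c ->
  rsum n (fun i => rsum n (fun j => (gg d n V c tau i j) ^ 2))
  <= 2 * rsum n (fun i => indb (inH d n V c tau i)) * (1 + c / tau).
Proof.
  intros Ht Ht1 Hc.
  pose proof (sum_pos d n V c tau Ht Ht1 Hc).
  pose proof (gram_psd d n (fun _ => 1) (yv d n V c tau)).
  apply Rle_trans with (2 * rsum n (fun i => rsum n (fun j => Rmax 0 (gg d n V c tau i j)))
                        - rsum n (fun i => rsum n (fun j => gg d n V c tau i j))).
  2: { assert (0 <= rsum n (fun i => rsum n (fun j => gg d n V c tau i j))).
       { eapply Rle_trans. apply H0. apply Req_le. apply rsum_ext; intros; apply rsum_ext; intros.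
         unfold gg. ring. }
       lra. }
  unfold Rminus. rewrite <- rsum_scal, <- rsum_opp, <- rsum_plus. apply rsum_le. intros i Hi.
  rewrite <- rsum_scal, <- rsum_opp, <- rsum_plus. apply rsum_le. intros j Hj.
  pose proof (gg_abs d n V c tau i j Ht).
  unfold Rmax. destruct Rle_dec; nra.
Qed.

Lemma rankB d n V c tau r : is_rank d n V r -> 0 < tau -> tau <= 1 -> 0 <= c ->
  rsum n (fun i => indb (inH d n V c tau i)) * rsum n (fun i => indb (inH d n V c tau i))
  <= INR r * (2 * rsum n (fun i => indb (inH d n V c tau i)) * (1 + c / tau)).
Proof.
  intros Hr Ht Ht1 Hc.
  destruct (span_all d n V r Hr) as [cols [Hl Hsp]].
  pose proof (rank_ineq d r (fun k x => V x (nth k cols 0%nat)) n (yv d n V c tau)) as RI.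
  assert (Hs : forall i, (i < n)%nat -> exists a : nat -> R, forall x, (x < d)%nat ->
      yv d n V c tau i x = rsum r (fun k => a k * (fun k x => V x (nth k cols 0%nat)) k x)).
  { intros i Hi. unfold yv. destruct (inH d n V c tau i).
    - destruct (Hsp i Hi) as [a Ha]. exists (fun k => / sqrt (nn d V i) * a k). intros x Hx.
      rewrite Ha by auto. rewrite Hl, <- rsum_scal. apply rsum_ext; intros; ring.
    - exists (fun _ => 0). intros. rewrite (rsum_ext r _ (fun _ => 0)) by (intros; ring).
      rewrite rsum_const. ring. }
  specialize (RI Hs).
  rewrite (rsum_ext n (fun i => dot d (yv d n V c tau i) (yv d n V c tau i)) (fun i => indb (inH d n V c tau i))) in RI
    by (intros k _; apply (gg_diag d n V c tau k Ht)).
  pose proof (sum_sq d n V c tau Ht Ht1 Hc).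
  unfold gg in H.
  pose proof (pos_INR r).
  rewrite <- Rsqr_pow2 in RI. unfold Rsqr in RI.
  eapply Rle_trans. apply RI. apply Rmult_le_compat_l; auto.
Qed.

Lemma lg_ge1 n : (2 <= n)%nat -> 1 <= lg (INR n).
Proof.
  intros Hn. assert (H2 : 2 <= INR n) by (replace 2 with (INR 2) by (simpl; ring); apply le_INR; auto).
  pose proof ln_lt_2. unfold lg.
  assert (ln 2 <= ln (INR n)).
  { destruct (Rle_lt_or_eq_dec _ _ H2) as [H'|H']. left; apply ln_increasing; lra. rewrite H'; lra. }
  apply (Rmult_le_reg_r (ln 2)). lra. unfold Rdiv. rewrite Rmult_assoc, Rinv_l by lra. lra.
Qed.

Theorem theorem1 :
  exists alpha : R, 0 < alpha /\
  forall (c Delta : R) (n d : nat) (V : nat -> nat -> R),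
    4 < c -> 0 < Delta -> (2 <= n)%nat ->
    exp_tri_S d n V c >= Delta * INR n ->
    forall r : nat, is_rank d n V r ->
    INR r >= alpha * (Delta ^ 4 / c ^ 9) * (INR n / (lg (INR n)) ^ 2).
Proof.
  exists (1/2000). split. lra.
  intros c D n d V Hc HD Hn HT r Hr.
  set (tau := D / (12 * (c * c))).
  assert (Htau : 0 < tau) by (unfold tau; apply Rdiv_lt_0_compat; nra).
  assert (HN : 2 <= INR n) by (replace 2 with (INR 2) by (simpl; ring); apply le_INR; auto).
  set (N := INR n) in *.
  pose proof (triA d n V c tau Htau ltac:(lra)) as TA. fold N in TA.
  set (h := rsum n (fun i => indb (inH d n V c tau i))) in *.
  assert (Hh : h <= N).
  { unfold h, N. rewrite <- (Rmult_1_r (INR n)), <- rsum_const. apply rsum_le. intros.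
    unfold indb. destruct (inH d n V c tau k); lra. }
  assert (E1 : tau * N * (c * c) = D * N / 12) by (unfold tau; field; lra).
  assert (B1 : 11 * D * N <= 36 * (c * c) * h) by lra.
  assert (HD4 : D <= 4 * (c * c)).
  { assert (36 * (c * c) * h <= 36 * (c * c) * N) by (apply Rmult_le_compat_l; nra).
    assert (11 * D * N <= 36 * (c * c) * N) by lra.
    assert (11 * D <= 36 * (c * c)) by (apply (Rmult_le_reg_r N); lra).
    nra. }
  assert (Htau1 : tau <= 1).
  { unfold tau. apply (Rmult_le_reg_r (12 * (c * c))). nra. unfold Rdiv. rewrite Rmult_assoc, Rinv_l by nra. nra. }
  pose proof (rankB d n V c tau r Hr Htau Htau1 ltac:(lra)) as RB. fold h in RB.
  set (R0 := INR r) in *. pose proof (pos_INR r). fold R0 in H.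
  assert (Hhp : 0 < h) by nra.
  assert (Ect : c / tau = 12 * (c * c * c) / D) by (unfold tau; field; lra).
  rewrite Ect in RB.
  assert (B2 : h * D <= 2 * R0 * (D + 12 * (c * c * c))).
  { assert (h <= R0 * (2 * (1 + 12 * (c * c * c) / D))).
    { apply (Rmult_le_reg_l h); auto. nra. }
    assert (R0 * (2 * (1 + 12 * (c * c * c) / D)) * D = 2 * R0 * (D + 12 * (c * c * c))) by (field; lra).
    nra. }
  assert (B3 : h * D <= 26 * R0 * (c * c * c)).
  { assert (D + 12 * (c*c*c) <= 13 * (c*c*c)) by nra. nra. }
  assert (B4 : 11 * (D * D) * N <= 936 * R0 * (c*c*c*c*c)).
  { assert (36 * (c*c) * (h * D) <= 36 * (c*c) * (26 * R0 * (c*c*c))) by (apply Rmult_le_compat_l; nra).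
    assert (11 * D * N * D <= 36 * (c * c) * h * D) by (apply Rmult_le_compat_r; lra).
    nra. }
  pose proof (lg_ge1 n Hn) as HL. fold N in HL.
  set (L := lg N) in *.
  assert (RHS1 : 1/2000 * (D ^ 4 / c ^ 9) * (N / L ^ 2) <= 1/2000 * (D ^ 4 / c ^ 9) * N).
  { apply Rmult_le_compat_l. apply Rmult_le_pos. lra. unfold Rdiv. apply Rmult_le_pos. apply pow_le; lra.
    left; apply Rinv_0_lt_compat; apply pow_lt; lra.
    unfold Rdiv. rewrite <- (Rmult_1_r N) at 2. apply Rmult_le_compat_l. lra.
    rewrite <- Rinv_1. apply Rinv_le_contravar. lra. nra. }
  assert (RHS2 : D ^ 4 / c ^ 9 <= 16 * (D * D) / (c*c*c*c*c)).
  { assert (Hc9 : 0 < c ^ 9) by (apply pow_lt; lra).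
    assert (Hc5 : 0 < c*c*c*c*c) by (assert (0 < c*c) by nra; assert (0 < c*c*c) by nra; nra).
    apply (Rmult_le_reg_r (c ^ 9)); auto. unfold Rdiv. rewrite Rmult_assoc, Rinv_l by lra.
    replace (c ^ 9) with ((c*c*c*c*c) * (c*c*c*c)) by ring.
    replace (16 * (D * D) * / (c * c * c * c * c) * (c * c * c * c * c * (c * c * c * c))) with (16 * (D * D) * (c*c*c*c)) by (field; lra).
    replace (D ^ 4 * 1) with ((D * D) * (D * D)) by ring.
    assert (0 <= D * D) by nra. assert (D * D <= 16 * (c*c*c*c)) by nra. nra. }
  apply Rle_ge. eapply Rle_trans. apply RHS1.
  assert (Hc5 : 0 < c*c*c*c*c) by (assert (0 < c*c) by nra; assert (0 < c*c*c) by nra; nra).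
  assert (1/2000 * (D ^ 4 / c ^ 9) * N <= 1/2000 * (16 * (D * D) / (c*c*c*c*c)) * N).
  { apply Rmult_le_compat_r. lra. apply Rmult_le_compat_l; lra. }
  eapply Rle_trans. apply H0.
  apply (Rmult_le_reg_r (c*c*c*c*c)); auto.
  replace (1 / 2000 * (16 * (D * D) / (c * c * c * c * c)) * N * (c * c * c * c * c)) with (16/2000 * (D * D) * N) by (field; lra).
  nra.
Qed.
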